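(* Let $n\in\mathbb N$, let $\sigma$ be a cyclic permutation of $(1,2,3,4)$ (i.e. a power of the $4$-cycle $(1\,2\,3\,4)$), and let $M=\frac{n}{2n-1}\sum_{i=1}^4\mathfrak P^{(n)}_i\otimes\mathfrak P^{(n)}_{\sigma(i)}$ acting on $\mathbb C^n\otimes\mathbb C^n$. (i) If $\sigma=\mathrm{id}$, then the largest eigenvalue of $M$ is $1$, and the corresponding eigenspace is $\mathbb C|\phi_n\rangle$. (ii) If $\sigma\neq\mathrm{id}$, then all eigenvalues of $M$ are strictly smaller than $1$.
   Context: $|\phi_n\rangle=\frac1{\sqrt n}\sum_{i=1}^n|i\rangle|i\rangle\in\mathbb C^n\otimes\mathbb C^n$ is the maximally entangled state. For $n\in\mathbb N$, $\mathfrak P^{(n)}_1,\dots,\mathfrak P^{(n)}_4\in M_n(\mathbb R)$ denote orthogonal projections (real symmetric idempotent matrices) such that (i) $\mathfrak P^{(n)}_1+\dots+\mathfrak P^{(n)}_4=(2-\frac1n)I_n$; (ii) $\operatorname{rk}\mathfrak P^{(n)}_1=\lfloor\frac n2\rfloor-(-1)^n$ and $\operatorname{rk}\mathfrak P^{(n)}_i=\lfloor\frac n2\rfloor$ for $i=2,3,4$; (iii) the only subspaces of $\mathbb C^n$ invariant under all four matrices are $0$ and $\mathbb C^n$. Such quadruples exist for every $n$, and any two of them are simultaneously unitarily equivalent; moreover, any quadruple of orthogonal projections on a Hilbert space summing to $(2-\frac1n)I$ with no nontrivial common invariant closed subspace is unitarily equivalent to one of the four cyclic shifts $(\mathfrak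 P^{(n)}_{\sigma(1)},\dots,\mathfrak P^{(n)}_{\sigma(4)})$, $\sigma$ a power of the cycle $(1\,2\,3\,4)$, and these four are pairwise inequivalent. *)

(* Defs.v *)
From mathcomp Require Import all_boot all_order all_algebra.
From mathcomp Require Import complex mxtens.
From mathcomp Require Import reals.
Set Implicit Arguments. Unset Strict Implicit. Unset Printing Implicit Defensive.
Import Order.TTheory GRing.Theory Num.Theory.
Local Open Scope ring_scope.

Definition cmx (R : realType) (m p : nat) (A : 'M[R]_(m, p)) : 'M[R[i]]_(m, p) :=
  map_mx (fun x : R => (x%:C)%C) A.

Definition orth_proj (R : realType) (n : nat) (P : 'M[R]_n) : Prop :=
  P^T = P /\ P *m P = P.

(* A subspace S of C^n (column vectors) is represented by a matrix U whose
   (transposed) rows span S; A S ⊆ S  iff  (U *m A^T <= U)%MS. *)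
Definition only_trivial_invariant_subspaces (C : fieldType) (I : Type) (n : nat)
  (A : I -> 'M[C]_n) : Prop :=
  forall U : 'M[C]_n, (forall i, (U *m (A i)^T <= U)%MS) ->
    (U == (0 : 'M[C]_n))%MS \/ row_full U.

(* The cyclic permutation i |-> i + k (mod 4) of {1,2,3,4} ~ 'I_4; these are
   exactly the powers (1 2 3 4)^k. *)
Definition cyc (k : 'I_4) (i : 'I_4) : 'I_4 := inZp (i + k).

Definition is_eigenvalue (C : fieldType) (m : nat) (M : 'M[C]_m) (l : C) : Prop :=
  exists v : 'cV[C]_m, v != 0 /\ M *m v = l *: v.

(* Maximally entangled state |phi_n> = n^{-1/2} sum_i |i>|i> in C^n (x) C^n,
   with |i>|j> the basis vector of index mxtens_index (i, j) = i*n + j. *)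
Definition phi (R : realType) (n : nat) : 'cV[R[i]]_(n * n) :=
  (sqrtC (n%:R : R[i]))^-1 *: \sum_(j < n) delta_mx (mxtens_index (j, j)) ord0.

(* Main.v *)
Require Import Defs.
From mathcomp Require Import all_boot all_order all_algebra.
From mathcomp Require Import complex mxtens.
From mathcomp Require Import reals.
From mathcomp Require Import ring zify.
Import Order.TTheory GRing.Theory Num.Theory.
Set Implicit Arguments. Unset Strict Implicit. Unset Printing Implicit Defensive.
Local Open Scope ring_scope.

Section Aux.
Variable R : realType.
Variable n : nat.
Local Notation C := R[i].

Definition vecm (X : 'M[C]_n) : 'cV[C]_(n * n) :=
  \col_k X (mxtens_unindex k).1 (mxtens_unindex k).2.
Definition unvec (v : 'cV[C]_(n * n)) : 'M[C]_n :=
  \matrix_(a, b) v (mxtens_index (a, b)) ord0.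

Lemma vecmE X a b j : vecm X (mxtens_index (a, b)) j = X a b.
Proof. by rewrite mxE mxtens_indexK. Qed.

Lemma unvecK : cancel unvec vecm.
Proof.
move=> v; apply/matrixP => k j; case: (mxtens_indexP k) => a b.
by rewrite vecmE mxE (ord1 j).
Qed.

Lemma vecmK : cancel vecm unvec.
Proof. by move=> X; apply/matrixP => a b; rewrite mxE vecmE. Qed.

Lemma vecm_sum (I : finType) (F : I -> 'M[C]_n) :
  vecm (\sum_i F i) = \sum_i vecm (F i).
Proof.
apply/matrixP => k j; rewrite !mxE !summxE; apply: eq_bigr => i _.
by rewrite mxE.
Qed.

Lemma vecmZ c X : vecm (c *: X) = c *: vecm X.
Proof. by apply/matrixP => k j; rewrite !mxE. Qed.

Lemma tens_vecm (A B : 'M[C]_n) X :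
  tensmx A B *m vecm X = vecm (A *m X *m B^T).
Proof.
apply/matrixP => k j; case: (mxtens_indexP k) => a b.
rewrite vecmE !mxE.
rewrite (reindex (@mxtens_index n n)) /=; last first.
  by apply: onW_bij; exact: (Bijective (@mxtens_indexK n n) (@mxtens_unindexK n n)).
rewrite (eq_bigr (fun p : 'I_n * 'I_n => A a p.1 * B b p.2 * X p.1 p.2)); last first.
  by move=> [c d] _; rewrite tensmxE vecmE.
rewrite -(pair_bigA _ (fun c d => A a c * B b d * X c d)) /=.
rewrite exchange_big /=; apply: eq_bigr => d _.
rewrite !mxE mulr_suml; apply: eq_bigr => c _.
ring.
Qed.

Lemma vecm_inj : injective vecm.
Proof. exact: can_inj vecmK. Qed.

Definition dot (X Y : 'M[C]_n) : C := \sum_a \sum_b (X a b)^*%C * Y a b.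

Lemma dotDr X Y Z : dot X (Y + Z) = dot X Y + dot X Z.
Proof.
rewrite /dot -big_split; apply: eq_bigr => a _; rewrite -big_split.
by apply: eq_bigr => b _; rewrite mxE mulrDr.
Qed.

Lemma dotBr X Y Z : dot X (Y - Z) = dot X Y - dot X Z.
Proof.
rewrite /dot -sumrB; apply: eq_bigr => a _; rewrite -sumrB.
by apply: eq_bigr => b _; rewrite !mxE mulrBr.
Qed.

Lemma dotZr X c Y : dot X (c *: Y) = c * dot X Y.
Proof.
rewrite /dot mulr_sumr; apply: eq_bigr => a _; rewrite mulr_sumr.
by apply: eq_bigr => b _; rewrite mxE; ring.
Qed.

Lemma dot_sumr X (I : finType) (F : I -> 'M[C]_n) :
  dot X (\sum_i F i) = \sum_i dot X (F i).
Proof.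
rewrite /dot [RHS]exchange_big; apply: eq_bigr => a _ /=.
rewrite [RHS]exchange_big; apply: eq_bigr => b _ /=.
by rewrite summxE mulr_sumr.
Qed.

Lemma conj_ge0 (x : C) : 0 <= x^*%C * x.
Proof. by rewrite mulrC -sqr_normc exprn_ge0. Qed.

Lemma conj_eq0 (x : C) : x^*%C * x = 0 -> x = 0.
Proof. by rewrite mulrC -sqr_normc => /eqP; rewrite sqrf_eq0 normr_eq0 => /eqP. Qed.

Lemma dot_ge0 X : 0 <= dot X X.
Proof. by apply: sumr_ge0 => a _; apply: sumr_ge0 => b _; apply: conj_ge0. Qed.

Lemma dot_eq0 X : dot X X = 0 -> X = 0.
Proof.
move=> h; apply/matrixP => a b; rewrite mxE; apply: conj_eq0.
have h1 : \sum_b (X a b)^*%C * X a b = 0.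
  apply: (psumr_eq0P _ h) => // a' _; apply: sumr_ge0 => b' _; exact: conj_ge0.
by apply: (psumr_eq0P _ h1) => // b' _; exact: conj_ge0.
Qed.

Lemma conjcM (x y : C) : (x * y)^*%C = x^*%C * y^*%C.
Proof. exact: (conjc_is_multiplicative _).1. Qed.

Lemma conjcD (x y : C) : (x + y)^*%C = x^*%C + y^*%C.
Proof. exact: rmorphD. Qed.

Lemma conjcB (x y : C) : (x - y)^*%C = x^*%C - y^*%C.
Proof. exact: rmorphB. Qed.

Lemma conjc_sum (I : Type) (r : seq I) (F : I -> C) :
  (\sum_(i <- r) F i)^*%C = \sum_(i <- r) (F i)^*%C.
Proof. exact: (big_morph _ conjcD (conjc0 _)). Qed.

Definition rsym (A : 'M[C]_n) := A^T = A /\ map_mx (@conjc R) A = A.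
Definition proj (A : 'M[C]_n) := rsym A /\ A *m A = A.

Lemma rsymE A a b : rsym A -> (A a b)^*%C = A b a.
Proof.
case=> h1 h2; have := congr1 (fun M : 'M[C]_n => M a b) h2; rewrite mxE => ->.
by have := congr1 (fun M : 'M[C]_n => M b a) h1; rewrite mxE => ->.
Qed.

Lemma dotMl A X Y : rsym A -> dot X (A *m Y) = dot (A *m X) Y.
Proof.
move=> hA; rewrite /dot.
rewrite (eq_bigr (fun a => \sum_b \sum_c (X a b)^*%C * (A a c * Y c b))); last first.
  by move=> a _; apply: eq_bigr => b _; rewrite mxE mulr_sumr.
rewrite [RHS](eq_bigr (fun c => \sum_b \sum_a (X a b)^*%C * (A a c * Y c b))); last first.
  move=> c _; apply: eq_bigr => b _; rewrite mxE conjc_sum mulr_suml.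
  by apply: eq_bigr => a _; rewrite conjcM (@rsymE A c a hA); ring.
rewrite [RHS]exchange_big /= [LHS]exchange_big /=; apply: eq_bigr => b _.
by rewrite exchange_big.
Qed.

Lemma dot_tr X Y : dot X Y = dot X^T Y^T.
Proof. rewrite /dot exchange_big; apply: eq_bigr => b _; apply: eq_bigr => a _.
by rewrite !mxE. Qed.

Lemma dotMr B X Y : rsym B -> dot X (Y *m B) = dot (X *m B) Y.
Proof.
move=> hB; rewrite dot_tr trmx_mul dotMl; last first.
  by case: hB => h1 h2; rewrite h1.
by rewrite [RHS]dot_tr trmx_mul; case: hB => -> _.
Qed.

Lemma rsym1B A : rsym A -> rsym (1%:M - A).
Proof.
case=> h1 h2; split; first by rewrite linearB /= trmx1 h1.
apply/matrixP => a b; rewrite !mxE conjcB conjc_nat.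
by have := congr1 (fun M : 'M[C]_n => M a b) h2; rewrite mxE => ->.
Qed.

Lemma proj1B A : proj A -> proj (1%:M - A).
Proof.
case=> h1 h2; split; first exact: rsym1B.
by rewrite mulmxBl mul1mx mulmxBr mulmx1 h2 subrr subr0.
Qed.

Lemma dot_proj P Q X : proj P -> proj Q ->
  dot (P *m X *m Q) (P *m X *m Q) = dot X (P *m X *m Q).
Proof.
case=> hP1 hP2 [hQ1 hQ2].
have e1 : P *m X *m Q = P *m (P *m X *m Q) by rewrite !mulmxA hP2.
have e2 : P *m X *m Q = P *m X *m Q *m Q by rewrite -[RHS]mulmxA hQ2.
by symmetry; rewrite [in LHS]e1 dotMl // [in LHS]e2 dotMr.
Qed.

Lemma key (A B : 'I_4 -> 'M[C]_n) (e s l : C) (X : 'M[C]_n) :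
  (forall i, proj (A i)) -> (forall i, proj (B i)) ->
  \sum_i A i = e%:M -> \sum_i B i = e%:M -> s * e = 1 -> 0 < s -> X != 0 ->
  s *: \sum_i (A i *m X *m B i) = l *: X ->
  l <= 1 /\ (l = 1 -> forall i, A i *m X = X *m B i).
Proof.
move=> hA hB sA sB se s0 X0 hX.
set d := dot X X.
have d0 : 0 < d.
  rewrite lt_def dot_ge0 andbT; apply/eqP => /dot_eq0 h; by rewrite h eqxx in X0.
set S := \sum_i dot X (A i *m X *m B i).
have hS : s * S = l * d.
  have := congr1 (dot X) hX; rewrite !dotZr dot_sumr => ->.
  by [].
set N1 := fun i => A i *m X *m (1%:M - B i).
set N2 := fun i => (1%:M - A i) *m X *m B i.
have hT : \sum_i (dot (N1 i) (N1 i) + dot (N2 i) (N2 i)) = (e * d - S) + (e * d - S).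
  have -> : \sum_i (dot (N1 i) (N1 i) + dot (N2 i) (N2 i)) =
     \sum_i (dot X (A i *m X) - dot X (A i *m X *m B i)) +
     \sum_i (dot X (X *m B i) - dot X (A i *m X *m B i)).
    rewrite -big_split; apply: eq_bigr => i _ /=.
    rewrite /N1 /N2 !dot_proj //; try exact: proj1B.
    by rewrite mulmxBr mulmx1 (dotBr X (A i *m X)) mulmxBl mul1mx mulmxBl dotBr.
  rewrite !sumrB; congr (_ - _ + (_ - _)).
    by rewrite -dot_sumr -mulmx_suml sA mul_scalar_mx dotZr.
  rewrite (eq_bigr (fun i => dot X (X *m B i))) // -dot_sumr -mulmx_sumr sB.
  by rewrite mul_mx_scalar dotZr.
have T0 : 0 <= (e * d - S) + (e * d - S).
  rewrite -hT; apply: sumr_ge0 => i _; apply: addr_ge0; exact: dot_ge0.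
have D0 : 0 <= e * d - S.
  by move: T0; rewrite -mulr2n -mulr_natr pmulr_lge0 // ltr0n.
have key1 : (1 - l) * d = s * (e * d - S).
  rewrite mulrBl mulrBr mul1r -hS mulrA se mul1r.
  by [].
split.
  rewrite -subr_ge0 -(pmulr_lge0 _ d0) key1; apply: mulr_ge0 => //.
  exact: ltW.
move=> l1 i.
have Z : e * d - S = 0.
  move: key1; rewrite l1 subrr mul0r => /esym/eqP.
  by rewrite mulf_eq0 (gt_eqF s0) /= => /eqP.
have Ti : dot (N1 i) (N1 i) + dot (N2 i) (N2 i) = 0.
  apply: (psumr_eq0P _ (etrans hT _)) => //.
    by move=> j _; apply: addr_ge0; exact: dot_ge0.
  by rewrite Z addr0.
move/eqP: Ti; rewrite paddr_eq0 ?dot_ge0 // => /andP[/eqP/dot_eq0 h1 /eqP/dot_eq0 h2].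
move: h1 h2; rewrite /N1 /N2 => /eqP h1 /eqP h2.
have E1 : A i *m X = A i *m X *m B i.
  by move: h1; rewrite mulmxBr mulmx1 subr_eq0 => /eqP.
have E2 : X *m B i = A i *m X *m B i.
  by move: h2; rewrite !mulmxBl mul1mx subr_eq0 => /eqP.
by rewrite E1 E2.
Qed.

End Aux.

Lemma schur (C : fieldType) (n : nat) (A : 'I_4 -> 'M[C]_n) (X : 'M[C]_n) :
  only_trivial_invariant_subspaces A -> (forall i, (A i)^T = A i) ->
  (forall j, exists B, A j *m X = X *m B) -> X = 0 \/ row_free X.
Proof.
move=> hI hT hX; case: (hI (kermx X)).
- move=> j; rewrite hT; apply/sub_kermxP; have [B hB] := hX j.
  by rewrite -mulmxA hB mulmxA mulmx_ker mul0mx.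
- by move/eqmx0P => h; right; rewrite -kermx_eq0 h.
- by rewrite -sub1mx => /sub_kermxP; rewrite mul1mx; left.
Qed.

Lemma cyc_inj (k : 'I_4) : injective (cyc k).
Proof.
move=> i j; rewrite /cyc => /(congr1 val) /=.
case: k i j => [[|[|[|[|k]]]] hk] // [[|[|[|[|i]]]] hi] // [[|[|[|[|j]]]] hj] //= _;
  by apply: val_inj.
Qed.

Lemma cyc0 (i : 'I_4) : cyc ord0 i = i.
Proof. by apply: val_inj; rewrite /= addn0 modn_small. Qed.

Lemma cyck0 (k : 'I_4) : cyc k ord0 = k.
Proof. by apply: val_inj; rewrite /= add0n modn_small. Qed.

Section Cmx.
Variable R : realType.
Variable n : nat.
Local Notation C := R[i].

Lemma rank_cmx (P : 'M[R]_n) : \rank (cmx P) = \rank P.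
Proof. exact: mxrank_map. Qed.

Lemma proj_cmx (P : 'M[R]_n) : orth_proj P -> proj (cmx P).
Proof.
case=> h1 h2; split; first split.
- by rewrite /cmx map_trmx h1.
- by apply/matrixP => a b; rewrite !mxE conjc_real.
- by rewrite /cmx -map_mxM h2.
Qed.

Lemma realcD (x y : R) : ((x + y)%:C = x%:C + y%:C)%C.
Proof. exact: rmorphD. Qed.

Lemma cmx_sum (F : 'I_4 -> 'M[R]_n) : cmx (\sum_i F i) = \sum_i cmx (F i).
Proof.
apply/matrixP => a b; rewrite !mxE !summxE.
rewrite (big_morph _ realcD (erefl (0%:C)%C)); apply: eq_bigr => i _.
by rewrite mxE.
Qed.

Lemma cmx_scal1 (x : R) : cmx (x *: 1%:M : 'M[R]_n) = (x%:C)%C%:M.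
Proof.
apply/matrixP => a b; rewrite !mxE; case: (a == b) => /=.
  by rewrite mulr1.
by rewrite mulr0.
Qed.

Lemma vecm1 : vecm 1%:M = \sum_(j < n) delta_mx (mxtens_index (j, j)) (ord0 : 'I_1) :> 'cV[C]_(n * n).
Proof.
apply/matrixP => kk jj; case: (mxtens_indexP kk) => a b.
rewrite vecmE summxE (ord1 jj) !mxE.
under eq_bigr => j _ do rewrite mxE (inj_eq (can_inj (@mxtens_indexK n n))) xpair_eqE eqxx andbT.
rewrite (bigD1 a) //= eqxx /= big1 ?addr0; first by rewrite eq_sym.
by move=> j; rewrite eq_sym => /negbTE ->.
Qed.

End Cmx.

Theorem lemma4p1 (R : realType) (n : nat) (P : 'I_4 -> 'M[R]_n) (k : 'I_4) :
  (0 < n)%N ->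
  (forall i, orth_proj (P i)) ->
  \sum_(i < 4) P i = (2 - (n%:R)^-1) *: 1%:M ->
  (\rank (P ord0))%:Z = (n./2)%:Z - (-1) ^+ n ->
  (forall i : 'I_4, i != ord0 -> \rank (P i) = n./2) ->
  only_trivial_invariant_subspaces (fun i => cmx (P i)) ->
  let M : 'M[R[i]]_(n * n) :=
    ((n%:R : R[i]) / (2 * n%:R - 1)) *: \sum_(i < 4) tensmx (cmx (P i)) (cmx (P (cyc k i))) in
  (k = ord0 ->
     is_eigenvalue M 1 /\
     (forall l, is_eigenvalue M l -> l <= 1) /\
     (forall v : 'cV[R[i]]_(n * n), M *m v = v <-> exists c : R[i], v = c *: phi R n)) /\
  (k != ord0 -> forall l, is_eigenvalue M l -> l < 1).
Proof.
move=> n0 hP hsum hr0 hr hirr M.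
set A := fun i => cmx (P i).
have hA : forall i, proj (A i) by move=> i; apply: proj_cmx.
have hAT : forall i, (A i)^T = A i by move=> i; case: (hA i) => [[]].
set e : R[i] := 2 - (n%:R)^-1.
have sA : \sum_i A i = e%:M.
  rewrite /A -cmx_sum hsum cmx_scal1; congr (_%:M).
  by rewrite rmorphB /= fmorphV /= !rmorph_nat.
have sB : \sum_i A (cyc k i) = e%:M.
  by rewrite -sA [RHS](reindex_inj (@cyc_inj k)).
set s : R[i] := n%:R / (2 * n%:R - 1).
have nz : (n%:R : R[i]) != 0 by rewrite pnatr_eq0 -lt0n.
have tz : 0 < (2 * n%:R - 1 : R[i]).
  by rewrite subr_gt0 -natrM ltr1n; lia.
have se : s * e = 1.
  rewrite /s /e; field; rewrite nz /=; exact: lt0r_neq0.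
have s0 : 0 < s by rewrite divr_gt0 // ltr0n.
have MvE : forall X, M *m vecm X = vecm (s *: \sum_i A i *m X *m A (cyc k i)).
  move=> X; rewrite /M -scalemxAl mulmx_suml vecmZ vecm_sum; congr (_ *: _).
  by apply: eq_bigr => i _; rewrite tens_vecm hAT.
have vecm0 : vecm (0 : 'M[R[i]]_n) = 0 by apply/matrixP => a b; rewrite !mxE.
have H1 : forall l v, v != 0 -> M *m v = l *: v ->
    l <= 1 /\ (l = 1 -> forall i, A i *m unvec v = unvec v *m A (cyc k i)).
  move=> l v v0 hv; set X := unvec v.
  have vX : v = vecm X by rewrite /X unvecK.
  apply: (key hA (fun i => hA (cyc k i)) sA sB se s0).
    by apply: contraNneq v0 => h; rewrite vX h vecm0.
  by apply: vecm_inj; rewrite -MvE vecmZ -vX.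
split; last first.
  move=> kne l [v [v0 hv]]; have [le1 eq1] := H1 l v v0 hv.
  rewrite lt_def le1 andbT; apply/negP => /eqP/esym l1.
  have hc := eq1 l1; set X := unvec v.
  have X0 : X != 0.
    by apply: contraNneq v0 => h; rewrite -(unvecK v) -/X h vecm0.
  have [h|rf] := schur hirr hAT (fun j => ex_intro _ _ (hc j)).
    by move: X0; rewrite /X h eqxx.
  have r1 : \rank (A ord0 *m X) = \rank (A ord0) by rewrite mxrankMfree.
  have r2 : \rank (X *m A k) = \rank (A k).
    rewrite -mxrank_tr trmx_mul mxrankMfree ?mxrank_tr //.
    by rewrite row_free_unit unitmx_tr -row_free_unit.
  move: r1; rewrite hc cyck0 r2 /A !rank_cmx (hr k kne) => hk.
  move: hr0; rewrite -hk; move: ((-1) ^+ n : int) (signr_eq0 int n) => t.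
  by move=> /negbT ht h; apply: (negP ht); apply/eqP; lia.
move=> k0.
have Mscal : forall t, M *m vecm t%:M = vecm t%:M.
  move=> t; rewrite MvE; congr vecm.
  rewrite (eq_bigr (fun i => t *: A i)); last first.
    move=> i _; rewrite k0 cyc0 mul_mx_scalar -scalemxAl.
    by case: (hA i) => _ ->.
  by rewrite -scaler_sumr sA !scale_scalar_mx mulrCA se mulr1.
set c0 : R[i] := (sqrtC (n%:R : R[i]))^-1.
have c0nz : c0 != 0 by rewrite invr_eq0 sqrtC_eq0.
have phiE : forall c, c *: phi R n = vecm (c * c0)%:M.
  by move=> c; rewrite /phi -vecm1 -!vecmZ scalerA scalemx1.
have phi1 : M *m phi R n = phi R n by rewrite -[phi R n]scale1r phiE Mscal.
have phi0 : phi R n != 0.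
  rewrite -[phi R n]scale1r phiE mul1r; apply/eqP => /(congr1 (@unvec R n)).
  rewrite vecmK => /(congr1 (fun N : 'M[R[i]]_n => N (Ordinal n0) (Ordinal n0))).
  by rewrite !mxE eqxx mulr1n; apply/eqP.
split; first by exists (phi R n); rewrite scale1r.
split; first by move=> l [v [v0 hv]]; case: (H1 l v v0 hv).
move=> v; split; last first.
  by move=> [c ->]; rewrite phiE Mscal.
move=> hv; have [->|v0] := eqVneq v 0.
  by exists 0; rewrite scale0r.
have [_ eq1] := H1 1 v v0 (etrans hv (esym (scale1r v))).
have hc := eq1 erefl; set X := unvec v.
have [lam] : exists lam, root (char_poly X) lam.
  by apply/closed_rootP; rewrite size_char_poly; move: n0; rewrite eqSS -lt0n.
rewrite -eigenvalue_root_char => ev.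
have hY : forall j, A j *m (X - lam%:M) = (X - lam%:M) *m A j.
  move=> j; rewrite mulmxBr mulmxBl (hc j) k0 cyc0 scalar_mxC //.
have [Y0|rf] := schur hirr hAT (fun j => ex_intro _ _ (hY j)).
  exists (lam / c0); rewrite phiE mulfVK //.
  move/eqP: Y0; rewrite subr_eq0 => /eqP <-.
  by rewrite /X unvecK.
by move: ev; rewrite /eigenvalue /eigenspace kermx_eq0 rf.
Qed.
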